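(* In the setting described in the context, for every $j\ne i^*$ and every collection of nonnegative numbers $(G_i(\theta_b))_{i\ne i^b}$, $$\min_{\mathbf M\in\mathcal A_j}\sum_{(i,\theta_b)\in I(\mathbf M)}G_i(\theta_b)=\min_{\mathbf M\in\widetilde{\mathcal A}_j}\sum_{(i,\theta_b)\in I(\mathbf M)}G_i(\theta_b).$$
   Context: There are $k\ge2$ solutions and parameter values $\theta_1,\dots,\theta_B$ with probabilities $p_b\ge0$, $\sum_bp_b=1$. For each $b$ a unique conditional optimum $i^b\in\{1,\dots,k\}$ is given, and $i^*=\arg\max_i\sum_bp_b\mathbf 1\{i=i^b\}$ is assumed unique. Let $\mathcal M=\{\mathbf M\in\{0,1\}^{k\times B}:\mathbf M^\top\mathbf 1_k=\mathbf 1_B\}$ with entries $m_{i,b}$; $d_j(\mathbf M)=\sum_bp_bm_{i^*,b}-\sum_bp_bm_{j,b}$; $d_j=\sum_bp_b\mathbf 1\{i^*=i^b\}-\sum_bp_b\mathbf 1\{j=i^b\}$; $I(\mathbf M)=\{(i,\theta_b):m_{i,b}=1,i\ne i^b\}$; $\mathcal A_j=\{\mathbf M\in\mathcal M:d_j(\mathbf M)\le0\}$. Let $\Xi=\{(i,\theta_b):i\ne i^*,i\ne i^b\}$ and $\Xi^{\mathrm{adv}}=\{(i^*,\theta_b):i^b\ne i^*\}$. For $(i,\theta_b)\in\Xi\cup\Xi^{\mathrm{adv}}$ let $v_j[(i,\theta_b)]=p_b(\mathbf 1\{j=i\}-\mathbf 1\{j=i^b\}-\mathbf 1\{i^*=i\}+\mathbf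 1\{i^*=i^b\})$ and $v_j[(i,\theta_b)]^+=\max\{v_j[(i,\theta_b)],0\}$. Define $\widetilde{\mathcal A}_j=\{\mathbf M\in\mathcal M:d_j-\sum_{(i,\theta_b)\in\Xi\cup\Xi^{\mathrm{adv}}}v_j[(i,\theta_b)]^+m_{i,b}\le0\}$. *)

(* Defs.v *)
From HB Require Import structures.
From mathcomp Require Import all_boot all_order all_algebra.
Set Implicit Arguments. Unset Strict Implicit. Unset Printing Implicit Defensive.
Import Order.TTheory GRing.Theory Num.Theory.
Local Open Scope ring_scope.

(* Solutions are indexed by 'I_k, parameter values theta_1..theta_B by 'I_B.
   A matrix M in {0,1}^{k x B} is a boolean matrix 'M[bool]_(k,B); entry
   m_{i,b} is (M i b)%:R. *)

Section Defs.
Variables (R : realFieldType) (k B : nat).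
Variables (p : 'I_B -> R) (ib : 'I_B -> 'I_k) (istar : 'I_k).

Definition inM (M : 'M[bool]_(k, B)) : Prop :=
  forall b : 'I_B, (\sum_(i < k) nat_of_bool (M i b))%N = 1%N.

Definition dM (j : 'I_k) (M : 'M[bool]_(k, B)) : R :=
  \sum_(b < B) p b * (M istar b)%:R - \sum_(b < B) p b * (M j b)%:R.

Definition d (j : 'I_k) : R :=
  \sum_(b < B) p b * (istar == ib b)%:R - \sum_(b < B) p b * (j == ib b)%:R.

Definition inI (M : 'M[bool]_(k, B)) (i : 'I_k) (b : 'I_B) : bool :=
  M i b && (i != ib b).

Definition costI (G : 'I_k -> 'I_B -> R) (M : 'M[bool]_(k, B)) : R :=
  \sum_(i < k) \sum_(b < B | inI M i b) G i b.

Definition inA (j : 'I_k) (M : 'M[bool]_(k, B)) : Prop :=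
  inM M /\ dM j M <= 0.

Definition inXi (i : 'I_k) (b : 'I_B) : bool := (i != istar) && (i != ib b).
Definition inXiadv (i : 'I_k) (b : 'I_B) : bool := (i == istar) && (ib b != istar).

Definition v (j i : 'I_k) (b : 'I_B) : R :=
  p b * ((j == i)%:R - (j == ib b)%:R - (istar == i)%:R + (istar == ib b)%:R).
Definition vplus (j i : 'I_k) (b : 'I_B) : R := Num.max (v j i b) 0.

Definition inAt (j : 'I_k) (M : 'M[bool]_(k, B)) : Prop :=
  inM M /\
  d j - \sum_(i < k) \sum_(b < B | inXi i b || inXiadv i b)
            vplus j i b * (M i b)%:R <= 0.

Definition is_min_over (P : 'M[bool]_(k, B) -> Prop)
  (f : 'M[bool]_(k, B) -> R) (c : R) : Prop :=
  (exists2 M, P M & f M = c) /\ (forall M, P M -> c <= f M).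

End Defs.

(* Main.v *)
Require Import Defs.
From HB Require Import structures.
From mathcomp Require Import all_boot all_order all_algebra.
From mathcomp Require Import ring lra.
Import Order.TTheory GRing.Theory Num.Theory.
Local Open Scope ring_scope.

Lemma exmin (R : realFieldType) (T : finType) (P : pred T) (f : T -> R) x0 :
  P x0 -> exists2 x, P x & forall y, P y -> f x <= f y.
Proof. by move=> Px0; case: (arg_minP f Px0) => x Px H; exists x. Qed.

Lemma onehot {k B} {M : 'M[bool]_(k, B)} : inM M ->
  forall b, exists r, forall i, M i b = (i == r).
Proof.
move=> HM b; have := HM b.
case: (pickP (fun i => M i b)) => [r Hr|H0]; last first.
  by rewrite big1 // => i _; rewrite H0.
rewrite (bigD1 r) //= Hr /= => /eqP; rewrite -[X in (_ == X)%N]addn0 eqn_add2l.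
move/eqP/(congr1 (fun n => n == 0%N)); rewrite eqxx sum_nat_eq0 => /forallP H.
exists r => i; case: (eqVneq i r) => [->//|ne].
by have := H i; rewrite ne /=; case: (M i b).
Qed.

Lemma sum_onehot {R : realFieldType} {k} {f : 'I_k -> R} {r} {m : 'I_k -> bool} :
  (forall i, m i = (i == r)) -> \sum_i f i * (m i)%:R = f r.
Proof.
move=> Hm; rewrite (bigD1 r) //= Hm eqxx mulr1 big1 ?addr0 // => i /negbTE ne.
by rewrite Hm ne mulr0.
Qed.

Theorem mainTheorem8 (R : realFieldType) (k B : nat) (hk : (2 <= k)%N)
  (p : 'I_B -> R) (hp0 : forall b, 0 <= p b) (hp1 : \sum_(b < B) p b = 1)
  (ib : 'I_B -> 'I_k) (istar : 'I_k)
  (hstar : forall i : 'I_k, i != istar ->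
     \sum_(b < B) p b * (i == ib b)%:R < \sum_(b < B) p b * (istar == ib b)%:R)
  (j : 'I_k) (hj : j != istar)
  (G : 'I_k -> 'I_B -> R) (hG : forall i b, i != ib b -> 0 <= G i b) :
  exists c : R,
    is_min_over (inA p istar j) (costI ib G) c /\
    is_min_over (inAt p ib istar j) (costI ib G) c.
Proof.
have vib : forall b, v p ib istar j (ib b) b = 0.
  by move=> b; rewrite /v; ring.
have ident : forall M : 'M[bool]_(k, B), inM M ->
    dM p istar j M = d p ib istar j
       - \sum_b \sum_i v p ib istar j i b * (M i b)%:R.
  move=> M HM; rewrite /dM /d -!sumrB; apply: eq_bigr => b _.
  have [r Hr] := onehot HM b; rewrite (sum_onehot Hr) !Hr /v; ring.
have cond : forall M : 'M[bool]_(k, B),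
    \sum_(i < k) \sum_(b < B | inXi ib istar i b || inXiadv ib istar i b)
            vplus p ib istar j i b * (M i b)%:R
    = \sum_b \sum_i (if i != ib b then vplus p ib istar j i b * (M i b)%:R else 0).
  move=> M; rewrite [RHS]exchange_big /=; apply: eq_bigr => i _.
  rewrite big_mkcond; apply: eq_bigr => b _; congr (if _ then _ else _).
  rewrite /inXi /inXiadv; case: (eqVneq i istar) => [->|ne] /=.
    by rewrite eq_sym.
  by rewrite orbF.
pose PA := fun M : 'M[bool]_(k,B) =>
  [forall b, (\sum_i nat_of_bool (M i b) == 1)%N] && (dM p istar j M <= 0).
have PAE : forall M, PA M <-> inA p istar j M.
  move=> M; split.
    by move/andP=> [/forallP H Hd]; split=> // b; apply/eqP.
  by case=> H Hd; apply/andP; split=> //; apply/forallP=> b; apply/eqP.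
pose M0 : 'M[bool]_(k,B) := \matrix_(i,b) (i == j).
have PA0 : PA M0.
  apply/PAE; split.
    move=> b; rewrite (bigD1 j) //= mxE eqxx big1 // => i /negbTE ne.
    by rewrite mxE ne.
  rewrite /dM big1 => [|b _]; last by rewrite mxE eq_sym (negbTE hj) mulr0.
  rewrite (eq_bigr p) ?hp1 => [|b _]; last by rewrite mxE eqxx mulr1.
  lra.
have [MA HMA Hmin] := @exmin R _ PA (costI ib G) _ PA0.
exists (costI ib G MA).
have AinAt : forall M, inA p istar j M -> inAt p ib istar j M.
  move=> M [HM Hd]; split=> //; rewrite cond; apply: le_trans Hd.
  rewrite ident // lerD2l lerN2; apply: ler_sum => b _; apply: ler_sum => i _.
  case: ifP => [_|/negbFE/eqP ->]; last by rewrite vib mul0r.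
  by apply: ler_wpM2r; [rewrite ler0n | rewrite /vplus le_max lexx].
split.
  split; first by exists MA => //; apply/PAE.
  by move=> M /PAE; apply: Hmin.
split; first by exists MA => //; apply/AinAt/PAE.
move=> M [HM Hc].
pose s b := \sum_i v p ib istar j i b * (M i b)%:R.
pose M' : 'M[bool]_(k,B) := \matrix_(i,b) if s b < 0 then i == ib b else M i b.
have HM' : inM M'.
  move=> b; under eq_bigr do rewrite mxE.
  case: (s b < 0); last exact: HM.
  rewrite (bigD1 (ib b)) //= eqxx big1 // => i /negbTE ne; by rewrite ne.
have inAM' : inA p istar j M'.
  split=> //; rewrite ident //; apply: le_trans Hc.
  rewrite cond lerD2l lerN2; apply: ler_sum => b _.
  have [r Hr] := onehot HM b.
  have sE : s b = v p ib istar j r b by rewrite /s (sum_onehot Hr).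
  have -> : \sum_i (if i != ib b then vplus p ib istar j i b * (M i b)%:R else 0)
       = if r != ib b then vplus p ib istar j r b else 0.
    rewrite (bigD1 r) //= big1 ?addr0 => [|i ne].
      by rewrite Hr eqxx mulr1.
    by case: ifP => // _; rewrite Hr (negbTE ne) mulr0.
  pose r' := if v p ib istar j r b < 0 then ib b else r.
  have Hr' : forall i, M' i b = (i == r').
    by move=> i; rewrite mxE sE /r'; case: ifP.
  rewrite (sum_onehot Hr') /r'.
  case: (ltrP (v p ib istar j r b) 0) => h.
    rewrite vib; case: ifP => _ //.
    by rewrite /vplus ge_max lexx (ltW h).
  by case: ifP => _ //; rewrite /vplus ge_max lexx h.
have Hcost : costI ib G M' <= costI ib G M.
  apply: ler_sum => i _; rewrite big_mkcond [leRHS]big_mkcond.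
  apply: ler_sum => b _; rewrite /inI mxE.
  case: (s b < 0) => /=; last exact: lexx.
  rewrite andbN; case: ifP => [/andP[_ ne]|_] //; exact: hG.
exact: le_trans (Hmin M' (proj2 (PAE M') inAM')) Hcost.
Qed.
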